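(* Let $\mathcal{X}\subset\mathbb{R}^d$ be compact with diameter $|\mathcal{X}|=\max_{x,x'\in\mathcal{X}}\|x-x'\|$, and let $\epsilon>0$, $\delta\in(0,1)$. Let $\{(x_i,y_i)\}_{i=1}^M\subset\mathcal{X}\times\mathbb{R}$ be a training set and $\sigma_y^2=\frac1M\sum_{i=1}^M y_i^2$. Let $f$ be the quantum (VQC) model with $L$ Pauli encoding gates on each of the $d$ input dimensions, with full freedom on its Fourier coefficients, trained by ridge regression with regularization $\lambda>0$. Let $\tilde f$ be the Random Fourier Features model with $D$ frequencies obtained by distinct sampling, trained on the same dataset with the same regularization $\lambda$. Then $|f(x)-\tilde f(x)|\le\epsilon$ holds with probability at least $1-\delta$ for a number of samples $$D=\Omega\!\left(\frac{d\,C_1(1+\lambda)^2}{\lambda^4\epsilon^2}\left[\log(dL^2|\mathcal{X}|)+\log\frac{C_2(1+\lambda)}{\epsilon\lambda^2}-\log\delta\right]\right),$$ where $C_1,C_2$ are constants depending only on $\sigma_y$ and $|\mathcal{X}|$, and $\Omega(\cdot)$ denotes the asymptotic ''Big-Omega'' lower-bound notation.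
   Context: Pauli encoding: each of the $L$ encoding gates per input coordinate $x_k$ has the form $e^{-i x_k \sigma/2}$ with $\sigma$ a Pauli matrix, so the frequency spectrum of the model is $\Omega=\{-L,\dots,L\}^d\subset\mathbb{Z}^d$. A VQC model ''with full freedom on the Fourier coefficients'' is any function $f(x)=\sum_{\omega\in\Omega}a_\omega\cos(\omega^Tx)+b_\omega\sin(\omega^Tx)$ with arbitrary real coefficients, i.e. a linear model $\mathbf{w}^T\phi(x)$ with feature vector $\phi(x)=\frac{1}{\sqrt{|\Omega|}}(\cos(\omega^Tx),\sin(\omega^Tx))_{\omega\in\Omega}$; equivalently a kernel ridge regression with the shift-invariant kernel $k(x,x')=\frac1{|\Omega|}\sum_{\omega\in\Omega}\cos(\omega^T(x-x'))$. Training with regularization $\lambda$ means minimizing $\frac1M\sum_i|\mathbf{w}^T\phi(x_i)-y_i|^2+\lambda\|\mathbf{w}\|^2$. Distinct sampling RFF model: sample $D$ frequencies $\omega_1,\dots,\omega_D$ i.i.d. uniformly from $\Omega$, set $\tilde\phi(x)=\frac1{\sqrt D}(\cos(\omega_j^Tx),\sin(\omega_j^Tx))_{j=1}^D$, and let $\tilde f(x)=\tilde{\mathbf{w}}^T\tilde\phi(x)$ where $\tilde{\mathbf{w}}$ solves the same ridge regression problem with $\tilde\phi$ in place of $\phi$. *)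

(* Defs.v *)
From HB Require Import structures.
From mathcomp Require Import all_boot all_order all_algebra.
From mathcomp Require Import all_classical all_reals all_analysis.
Set Implicit Arguments. Unset Strict Implicit. Unset Printing Implicit Defensive.
Import Order.TTheory GRing.Theory Num.Theory.
Import numFieldNormedType.Exports.
Local Open Scope classical_set_scope.
Local Open Scope ring_scope.

Section VQC.
Variable R : realType.

Definition eucl_dist (d : nat) (x x' : 'rV[R]_d) : R :=
  Num.sqrt (\sum_(k < d) (x 0 k - x' 0 k) ^+ 2).

Definition diam (d : nat) (X : set 'rV[R]_d) : R :=
  sup [set eucl_dist x x' | x in X & x' in X].

(* Frequency spectrum Omega = {-L,...,L}^d : the component k of om is
   (om k : nat) - L. *)
Definition Omega (d L : nat) := {ffun 'I_d -> 'I_(2 * L + 1)}.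

Definition freq_coord (d L : nat) (om : Omega d L) (k : 'I_d) : R :=
  ((om k : nat)%:R - L%:R).

Definition freq_dot (d L : nat) (om : Omega d L) (x : 'rV[R]_d) : R :=
  \sum_(k < d) freq_coord om k * x 0 k.

Definition trig (b : bool) (t : R) : R := if b then cos t else sin t.

Definition phi_full (d L : nat) (x : 'rV[R]_d) (j : Omega d L * bool) : R :=
  (Num.sqrt #|{: Omega d L}|%:R)^-1 * trig j.2 (freq_dot j.1 x).

Definition phi_rff (d L D : nat) (s : {ffun 'I_D -> Omega d L})
  (x : 'rV[R]_d) (j : 'I_D * bool) : R :=
  (Num.sqrt D%:R)^-1 * trig j.2 (freq_dot (s j.1) x).

Definition linmodel (I : finType) (w : I -> R) (feat : I -> R) : R :=
  \sum_(j : I) w j * feat j.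

Definition ridge_obj (I : finType) (d M : nat) (phi : 'rV[R]_d -> I -> R)
  (xs : 'I_M -> 'rV[R]_d) (ys : 'I_M -> R) (lam : R) (w : I -> R) : R :=
  M%:R^-1 * \sum_(i < M) (linmodel w (phi (xs i)) - ys i) ^+ 2
  + lam * \sum_(j : I) w j ^+ 2.

Definition ridge_solution (I : finType) (d M : nat) (phi : 'rV[R]_d -> I -> R)
  (xs : 'I_M -> 'rV[R]_d) (ys : 'I_M -> R) (lam : R) (w : I -> R) : Prop :=
  forall w' : I -> R, ridge_obj phi xs ys lam w <= ridge_obj phi xs ys lam w'.

Definition sigma_y (M : nat) (ys : 'I_M -> R) : R :=
  Num.sqrt (M%:R^-1 * \sum_(i < M) ys i ^+ 2).

(* Probability of an event over D i.i.d. uniform draws from Omega,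
   i.e. the uniform probability on Omega^D. *)
Definition prob_sample (d L D : nat) (E : {ffun 'I_D -> Omega d L} -> Prop) : R :=
  #|[set s : {ffun 'I_D -> Omega d L} | `[< E s >]]|%:R
  / #|{: {ffun 'I_D -> Omega d L}}|%:R.

Definition close_event (d L M D : nat) (X : set 'rV[R]_d)
  (xs : 'I_M -> 'rV[R]_d) (ys : 'I_M -> R) (lam eps : R)
  (s : {ffun 'I_D -> Omega d L}) : Prop :=
  forall (w : Omega d L * bool -> R) (wt : 'I_D * bool -> R),
    ridge_solution (@phi_full d L) xs ys lam w ->
    ridge_solution (phi_rff s) xs ys lam wt ->
    forall x, X x ->
      `| linmodel w (phi_full x) - linmodel wt (phi_rff s x) | <= eps.

End VQC.

(* Main.v *)
Require Import Defs.
From HB Require Import structures.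
From mathcomp Require Import all_boot all_order all_algebra.
From mathcomp Require Import all_classical all_reals all_analysis.
From mathcomp Require Import ring lra.
Set Implicit Arguments. Unset Strict Implicit. Unset Printing Implicit Defensive.
Import Order.TTheory GRing.Theory Num.Theory.
Import numFieldNormedType.Exports.
Local Open Scope classical_set_scope.
Local Open Scope ring_scope.
Section P2.
Variable R : realType.

Lemma l1_l2 (M : nat) (v : 'I_M -> R) :
  (\sum_i `|v i|) ^+ 2 <= M%:R * \sum_i v i ^+ 2.
Proof.
set a := fun i => `|v i|.
have -> : \sum_i v i ^+ 2 = \sum_i a i ^+ 2 by apply: eq_bigr => i _; rewrite /a real_normK // num_real.
have H : 0 <= \sum_(i < M) \sum_(j < M) (a i - a j) ^+ 2.
  by apply: sumr_ge0 => i _; apply: sumr_ge0 => j _; apply: sqr_ge0.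
have E : \sum_(i < M) \sum_(j < M) (a i - a j) ^+ 2 =
   (M%:R * \sum_i a i ^+ 2 - (\sum_i a i) ^+ 2) *+ 2.
  have E1 : forall i j, (a i - a j) ^+ 2 = a i ^+ 2 + a j ^+ 2 - (a i * a j) *+ 2.
    by move=> i j; rewrite sqrrB mulr2n; ring.
  under eq_bigr do under eq_bigr do rewrite E1.
  under eq_bigr do rewrite sumrB big_split /=.
  rewrite sumrB big_split /=.
  rewrite expr2 mulr_suml.
  under [X in _ = (_ - X) *+ 2]eq_bigr do rewrite mulr_sumr.
  have X1 : \sum_(i < M) \sum_(j < M) a i ^+ 2 = M%:R * \sum_i a i ^+ 2.
    by rewrite mulr_sumr; apply: eq_bigr => i _; rewrite sumr_const card_ord mulr_natl.
  have X2 : \sum_(i < M) \sum_(j < M) (a i * a j) *+ 2 = (\sum_(i < M) \sum_(j < M) a i * a j) *+ 2.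
    by rewrite -sumrMnl; apply: eq_bigr => i _; rewrite -sumrMnl.
  rewrite X1 X2 sumr_const card_ord.
  move: (\sum_(i < M) a i ^+ 2) (\sum_(i < M) \sum_(j < M) a i * a j) => p q.
  Timeout 20 ring.
move: H; rewrite E -mulr_natr pmulr_lge0 // subr_ge0.
by rewrite expr2 mulr_suml; under eq_bigr do rewrite mulr_sumr.
Qed.
End P2.
Section P3.
Variable R : realType.

Lemma ridge_core (M : nat) (lam s : R) (y a b : 'I_M -> R)
  (K1 K2 : 'I_M -> 'I_M -> R) (k1 k2 : 'I_M -> R) :
  (0 < M)%N -> 0 < lam -> 0 <= s ->
  (forall g : 'I_M -> R, 0 <= \sum_i \sum_l g i * g l * K2 l i) ->
  (forall g : 'I_M -> R, 0 <= \sum_i \sum_l g i * g l * K1 l i) ->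
  (forall i, M%:R * lam * a i + \sum_l a l * K1 l i = y i) ->
  (forall i, M%:R * lam * b i + \sum_l b l * K2 l i = y i) ->
  (forall i l, `|K1 l i - K2 l i| <= s) ->
  (forall i, `|k1 i - k2 i| <= s) -> (forall i, `|k2 i| <= 1) ->
  `|\sum_i a i * k1 i - \sum_i b i * k2 i|
    <= s * Num.sqrt (M%:R^-1 * \sum_i y i ^+ 2) * (1 + lam) / lam ^+ 2.
Proof.
move=> M0 lam0 s0 psd2 psd1 Ha Hb HK Hk Hk2.
set c := M%:R * lam.
have Mpos : 0 < M%:R :> R by rewrite ltr0n.
have c0 : 0 < c by rewrite mulr_gt0.
set N2a := \sum_i a i ^+ 2.
set N2y := \sum_i y i ^+ 2.
set S := \sum_i a i * y i.
have h1 : c * N2a <= S.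
  have -> : S = c * N2a + \sum_i \sum_l a i * a l * K1 l i.
    rewrite /S /N2a mulr_sumr -big_split /=; apply: eq_bigr => i _.
    rewrite -Ha mulrDr mulr_sumr; congr (_ + _); first by rewrite /c expr2; ring.
    by apply: eq_bigr => l _; ring.
  by rewrite lerDl.
have h2 : (c *+ 2) * S <= c ^+ 2 * N2a + N2y.
  rewrite /S /N2a /N2y mulr_sumr mulr_sumr -big_split /=; apply: ler_sum => i _.
  rewrite -subr_ge0.
  have -> : c ^+ 2 * a i ^+ 2 + y i ^+ 2 - c *+ 2 * (a i * y i) = (c * a i - y i) ^+ 2.
    by rewrite sqrrB; ring.
  exact: sqr_ge0.
have hNa : c ^+ 2 * N2a <= N2y.
  have N2a0 : 0 <= N2a by apply: sumr_ge0 => i _; apply: sqr_ge0.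
  rewrite -mulr_natr in h2. nra.
set g := fun i => a i - b i.
set A1 := \sum_i `|a i|.
set G1 := \sum_i `|g i|.
set N2g := \sum_i g i ^+ 2.
have A10 : 0 <= A1 by apply: sumr_ge0 => i _.
have G10 : 0 <= G1 by apply: sumr_ge0 => i _.
have hg : c * N2g <= s * G1 * A1.
  have Eg : forall i, c * g i + \sum_l g l * K2 l i = \sum_l a l * (K2 l i - K1 l i).
    move=> i; have := Ha i; have := Hb i.
    rewrite /g /c => Eb Ea.
    have -> : \sum_l (a l - b l) * K2 l i = \sum_l a l * K2 l i - \sum_l b l * K2 l i.
      by rewrite -sumrB; apply: eq_bigr => l _; ring.
    have -> : \sum_l a l * (K2 l i - K1 l i) = \sum_l a l * K2 l i - \sum_l a l * K1 l i.
      by rewrite -sumrB; apply: eq_bigr => l _; ring.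
    have : M%:R * lam * a i + \sum_l a l * K1 l i = M%:R * lam * b i + \sum_l b l * K2 l i.
      by rewrite Ea Eb.
    move: (\sum_l a l * K1 l i) (\sum_l b l * K2 l i) (\sum_l a l * K2 l i) => p q r E.
    have -> : M%:R * lam * (a i - b i) = M%:R * lam * a i - M%:R * lam * b i by ring.
    lra.
  have E2 : \sum_i g i * (c * g i + \sum_l g l * K2 l i) = c * N2g + \sum_i \sum_l g i * g l * K2 l i.
    rewrite /N2g mulr_sumr -big_split /=; apply: eq_bigr => i _.
    rewrite mulrDr mulr_sumr; congr (_ + _); first by rewrite expr2; ring.
    by apply: eq_bigr => l _; ring.
  have : c * N2g <= \sum_i g i * (c * g i + \sum_l g l * K2 l i).
    by rewrite E2 lerDl.
  move=> /le_trans; apply.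
  under eq_bigr do rewrite Eg.
  apply: (le_trans (ler_norm _)).
  apply: (le_trans (ler_norm_sum _ _ _)).
  rewrite (_ : s * G1 * A1 = G1 * (A1 * s)); last by ring.
  rewrite /G1 mulr_suml; apply: ler_sum => i _.
  rewrite normrM; apply: ler_wpM2l => //.
  apply: (le_trans (ler_norm_sum _ _ _)).
  rewrite /A1 mulr_suml; apply: ler_sum => l _.
  rewrite normrM; apply: ler_wpM2l => //.
  by rewrite distrC.
have hG : lam * G1 <= s * A1.
  have := l1_l2 g; rewrite -/G1 -/N2g => hG2.
  have : lam * G1 ^+ 2 <= s * G1 * A1.
    apply: le_trans hg; rewrite (_ : c * N2g = lam * (M%:R * N2g)); last by rewrite /c; ring.
    by apply: ler_wpM2l; [exact: ltW|exact: hG2].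
  have [->|Gp] := eqVneq G1 0; first by move=> _; rewrite mulr0 mulr_ge0.
  have Gpos : 0 < G1 by rewrite lt_def Gp G10.
  move=> h; rewrite -(ler_pM2r Gpos) (_ : lam * G1 * G1 = lam * G1 ^+ 2); last by rewrite expr2 mulrA.
  by rewrite (_ : s * A1 * G1 = s * G1 * A1) //; ring.
have hA : lam * A1 <= Num.sqrt (M%:R^-1 * N2y).
  have hA2 := l1_l2 a; rewrite -/A1 -/N2a in hA2.
  have N2y0 : 0 <= N2y by apply: sumr_ge0 => i _; apply: sqr_ge0.
  have lA0 : 0 <= lam * A1 by rewrite mulr_ge0 // ltW.
  rewrite -(ler_sqr (x:=lam * A1)) ?nnegrE ?sqrtr_ge0 //.
  have My0 : 0 <= M%:R^-1 * N2y by rewrite mulr_ge0 // invr_ge0 ltW.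
  rewrite sqr_sqrtr //.
  rewrite -(ler_pM2l Mpos) mulVKf ?gt_eqF //.
  have Mc : M%:R * (lam * A1) ^+ 2 * M%:R = c ^+ 2 * A1 ^+ 2 by rewrite /c; ring.
  rewrite -(ler_pM2r Mpos) Mc.
  have h := ler_wpM2l (ltW (exprn_gt0 2 c0)) hA2.
  apply: (le_trans h). rewrite mulrCA mulrC; apply: ler_wpM2r; [exact: ltW|exact: hNa].
have hfin : `|\sum_i a i * k1 i - \sum_i b i * k2 i| <= G1 + s * A1.
  have -> : \sum_i a i * k1 i - \sum_i b i * k2 i =
     \sum_i g i * k2 i + \sum_i a i * (k1 i - k2 i).
    rewrite -sumrB -big_split /=; apply: eq_bigr => i _; rewrite /g; ring.
  apply: (le_trans (ler_normD _ _)); apply: lerD.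
    apply: (le_trans (ler_norm_sum _ _ _)); apply: ler_sum => i _.
    by rewrite normrM ler_piMr.
  apply: (le_trans (ler_norm_sum _ _ _)); rewrite /A1 mulr_sumr; apply: ler_sum => i _.
  by rewrite normrM mulrC ler_wpM2r.
set Sq := Num.sqrt _ in hA *.
have lam2 : 0 < lam ^+ 2 by apply: exprn_gt0.
rewrite ler_pdivlMr //.
apply: (le_trans (ler_wpM2r (ltW lam2) hfin)).
have Sq0 : 0 <= Sq by apply: sqrtr_ge0.
have t1 := ler_wpM2l (ltW lam0) hG.
have t2 := ler_wpM2l s0 hA.
have t3 := ler_wpM2l (mulr_ge0 s0 (ltW lam0)) hA.
rewrite expr2; lra.
Qed.
End P3.
Section P4.
Variable R : realType.

Lemma foc_zero (A B : R) : 0 <= B ->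
  (forall t, 0 <= t ^+ 2 * B - (t *+ 2) * A) -> A = 0.
Proof.
move=> B0 H; have u0 : 0 < B + 1 by rewrite ltr_wpDl.
have := H (A / (B + 1)).
have -> : (A / (B + 1)) ^+ 2 * B - (A / (B + 1)) *+ 2 * A =
   - (A ^+ 2 * (B + 2)) / (B + 1) ^+ 2.
  by field; rewrite gt_eqF.
rewrite pmulr_lge0 ?invr_gt0 ?exprn_gt0 // oppr_ge0 => h.
have : A ^+ 2 * (B + 2) == 0.
  rewrite eq_le h mulr_ge0 ?sqr_ge0 //; lra.
rewrite mulf_eq0 sqrf_eq0 => /orP [/eqP //|]; lra.
Qed.

Lemma ridge_foc (I : finType) (d M : nat) (phi : 'rV[R]_d -> I -> R)
  (xs : 'I_M -> 'rV[R]_d) (ys : 'I_M -> R) (lam : R) (w : I -> R) :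
  0 <= lam -> ridge_solution phi xs ys lam w ->
  forall j, lam * w j = M%:R^-1 * \sum_i (ys i - linmodel w (phi (xs i))) * phi (xs i) j.
Proof.
move=> lam0 Hw j.
set e := fun (t : R) k => w k + (if k == j then t else 0).
have lin_e : forall t x, linmodel (e t) (phi x) = linmodel w (phi x) + t * phi x j.
  move=> t x; rewrite /linmodel /e.
  under eq_bigr do rewrite mulrDl.
  rewrite big_split /=; congr (_ + _).
  rewrite (bigD1 j) //= eqxx big1 ?addr0 // => k /negbTE ->; by rewrite mul0r.
set B := M%:R^-1 * \sum_i phi (xs i) j ^+ 2 + lam.
set A := M%:R^-1 * \sum_i (ys i - linmodel w (phi (xs i))) * phi (xs i) j - lam * w j.
have Eobj : forall t, ridge_obj phi xs ys lam (e t) =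
    ridge_obj phi xs ys lam w + (t ^+ 2 * B - (t *+ 2) * A).
  move=> t; rewrite /ridge_obj.
  under eq_bigr do rewrite lin_e.
  have -> : \sum_(i < M) (linmodel w (phi (xs i)) + t * phi (xs i) j - ys i) ^+ 2 =
     \sum_(i < M) (linmodel w (phi (xs i)) - ys i) ^+ 2 +
     (t ^+ 2 * \sum_i phi (xs i) j ^+ 2 - (t *+ 2) *
         \sum_i (ys i - linmodel w (phi (xs i))) * phi (xs i) j).
    rewrite !mulr_sumr -sumrB -big_split /=; apply: eq_bigr => i _.
    ring.
  have -> : \sum_k e t k ^+ 2 = \sum_k w k ^+ 2 + (t *+ 2 * w j + t ^+ 2).
    have -> : \sum_k e t k ^+ 2 = \sum_k w k ^+ 2 +
        \sum_k (if k == j then t else 0) * (w k *+ 2 + (if k == j then t else 0)).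
      rewrite -big_split /=; apply: eq_bigr => k _; rewrite /e; ring.
    congr (_ + _); rewrite (bigD1 j) //= eqxx big1 ?addr0.
      by ring.
    by move=> k /negbTE ->; rewrite mul0r.
  rewrite /B /A; ring.
have HA : A = 0.
  apply: (foc_zero (B := B)).
    by rewrite /B addr_ge0 // mulr_ge0 ?invr_ge0 ?ler0n // sumr_ge0 // => i _; exact: sqr_ge0.
  move=> t; have := Hw (e t); rewrite Eobj; lra.
by move: HA; rewrite /A => /eqP; rewrite subr_eq0 => /eqP ->.
Qed.
End P4.
Section P5.
Variable R : realType.

Definition kern (I : finType) (d : nat) (phi : 'rV[R]_d -> I -> R) (a b : 'rV[R]_d) : R :=
  \sum_j phi a j * phi b j.

Lemma kern_psd (I : finType) (d M : nat) (phi : 'rV[R]_d -> I -> R) (xs : 'I_M -> 'rV[R]_d)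
  (g : 'I_M -> R) : 0 <= \sum_i \sum_l g i * g l * kern phi (xs l) (xs i).
Proof.
have -> : \sum_i \sum_l g i * g l * kern phi (xs l) (xs i) =
          \sum_j (\sum_i g i * phi (xs i) j) ^+ 2.
  transitivity (\sum_i \sum_l \sum_j g i * phi (xs i) j * (g l * phi (xs l) j)).
    apply: eq_bigr => i _; apply: eq_bigr => l _.
    rewrite /kern mulr_sumr; apply: eq_bigr => j _; ring.
  under eq_bigr do rewrite exchange_big /=.
  rewrite exchange_big /=; apply: eq_bigr => j _.
  rewrite expr2 mulr_suml; apply: eq_bigr => i _.
  by rewrite mulr_sumr.
by apply: sumr_ge0 => j _; apply: sqr_ge0.
Qed.

Lemma ridge_repr (I : finType) (d M : nat) (phi : 'rV[R]_d -> I -> R)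
  (xs : 'I_M -> 'rV[R]_d) (ys : 'I_M -> R) (lam : R) (w : I -> R) :
  (0 < M)%N -> 0 < lam -> ridge_solution phi xs ys lam w ->
  let al := fun i => (ys i - linmodel w (phi (xs i))) / (M%:R * lam) in
  (forall x, linmodel w (phi x) = \sum_i al i * kern phi (xs i) x) /\
  (forall i, M%:R * lam * al i + \sum_l al l * kern phi (xs l) (xs i) = ys i).
Proof.
move=> M0 lam0 Hw al.
have Mpos : 0 < M%:R :> R by rewrite ltr0n.
have Hfoc := ridge_foc (ltW lam0) Hw.
have Ew : forall j, w j = \sum_i al i * phi (xs i) j.
  move=> j; have := Hfoc j => /(congr1 (fun z => z / lam)).
  rewrite mulrC mulKf ?gt_eqF // => ->.
  rewrite mulr_sumr mulr_suml; apply: eq_bigr => i _; rewrite /al.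
  by field; rewrite !gt_eqF.
have Ef : forall x, linmodel w (phi x) = \sum_i al i * kern phi (xs i) x.
  move=> x; rewrite /linmodel.
  under eq_bigr do rewrite Ew mulr_suml.
  rewrite exchange_big /=; apply: eq_bigr => i _.
  rewrite /kern mulr_sumr; apply: eq_bigr => j _; ring.
split=> // i.
rewrite -Ef /al.
by field; rewrite !gt_eqF.
Qed.

Lemma det_bound (I1 I2 : finType) (d M : nat)
  (phi1 : 'rV[R]_d -> I1 -> R) (phi2 : 'rV[R]_d -> I2 -> R)
  (xs : 'I_M -> 'rV[R]_d) (ys : 'I_M -> R) (lam s : R) (w1 : I1 -> R) (w2 : I2 -> R)
  (x : 'rV[R]_d) :
  (0 < M)%N -> 0 < lam -> 0 <= s ->
  ridge_solution phi1 xs ys lam w1 -> ridge_solution phi2 xs ys lam w2 ->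
  (forall i l, `|kern phi1 (xs l) (xs i) - kern phi2 (xs l) (xs i)| <= s) ->
  (forall i, `|kern phi1 (xs i) x - kern phi2 (xs i) x| <= s) ->
  (forall i, `|kern phi2 (xs i) x| <= 1) ->
  `|linmodel w1 (phi1 x) - linmodel w2 (phi2 x)| <= s * sigma_y ys * (1 + lam) / lam ^+ 2.
Proof.
move=> M0 lam0 s0 H1 H2 HK Hk Hk2.
have [E1 F1] := ridge_repr M0 lam0 H1.
have [E2 F2] := ridge_repr M0 lam0 H2.
rewrite E1 E2.
exact: (ridge_core M0 lam0 s0 (kern_psd phi2 xs) (kern_psd phi1 xs) F1 F2 HK Hk Hk2).
Qed.
End P5.
Section P6.
Variable R : realType.

Lemma freq_dotB d L (om : Omega d L) (a b : 'rV[R]_d) :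
  freq_dot om a - freq_dot om b = freq_dot om (a - b).
Proof.
rewrite /freq_dot -sumrB; apply: eq_bigr => k _; rewrite !mxE; ring.
Qed.

Lemma kern_trig (T : finType) (c : R) d L (f : T -> Omega d L) (a b : 'rV[R]_d) :
  \sum_(j : T * bool) (c * trig j.2 (freq_dot (f j.1) a)) * (c * trig j.2 (freq_dot (f j.1) b))
  = c ^+ 2 * \sum_(t : T) cos (freq_dot (f t) (a - b)) :> R.
Proof.
rewrite -(pair_big xpredT xpredT (fun t (bb : bool) =>
   (c * trig bb (freq_dot (f t) a)) * (c * trig bb (freq_dot (f t) b)))) /=.
rewrite mulr_sumr; apply: eq_bigr => t _.
rewrite big_bool /= -freq_dotB cosB; ring.
Qed.

Lemma kern_full d L (a b : 'rV[R]_d) :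
  kern (@phi_full R d L) a b =
  #|{: Omega d L}|%:R^-1 * \sum_(om : Omega d L) cos (freq_dot om (a - b)).
Proof.
rewrite /kern /phi_full.
rewrite (kern_trig _ (fun om : Omega d L => om)).
by rewrite exprVn sqr_sqrtr ?ler0n.
Qed.

Lemma kern_rff d L D (s : {ffun 'I_D -> Omega d L}) (a b : 'rV[R]_d) :
  kern (phi_rff s) a b = D%:R^-1 * \sum_(j < D) cos (freq_dot (s j) (a - b)).
Proof.
rewrite /kern /phi_rff (kern_trig _ s).
by rewrite exprVn sqr_sqrtr ?ler0n.
Qed.

Lemma avg_cos_le1 (T : finType) (f : T -> R) : (0 < #|T|)%N ->
  `|#|T|%:R^-1 * \sum_(t : T) cos (f t)| <= 1.
Proof.
move=> T0; rewrite normrM ger0_norm ?invr_ge0 ?ler0n //.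
rewrite ler_pdivrMl ?ltr0n // mulr1.
apply: (le_trans (ler_norm_sum _ _ _)).
rewrite -sum1_card natr_sum; apply: ler_sum => t _; exact: cos_max.
Qed.

Lemma cos_lip (u v : R) : `|cos u - cos v| <= `|u - v|.
Proof.
wlog uv : u v / u <= v.
  move=> H; case: (leP u v) => [/H //|/ltW /H]; by rewrite distrC [`|v - u|]distrC.
rewrite distrC [X in _ <= X]distrC.
have [c _ ->] := @MVT_segment R cos (fun x => - sin x) u v uv
  (fun x _ => is_derive_cos x) (continuous_subspaceT (@continuous_cos R)).
by rewrite normrM ler_piMl ?normr_ge0 // normrN sin_max.
Qed.

Lemma freq_coord_le d L (om : Omega d L) k : `|@freq_coord R d L om k| <= L%:R :> R.
Proof.
rewrite /freq_coord; have := ltn_ord (om k); set m := nat_of_ord (om k) => hm.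
have hm' : (m <= 2 * L)%N by move: hm; rewrite addn1 ltnS.
have : m%:R <= (2 * L)%:R :> R by rewrite ler_nat.
rewrite natrM => h2.
have m0 : 0 <= m%:R :> R by rewrite ler0n.
rewrite ler_norml; apply/andP; split; lra.
Qed.

Lemma cos_dot_lip d L (om : Omega d L) (z z' : 'rV[R]_d) (r : R) :
  (forall k, `|z 0 k - z' 0 k| <= r) ->
  `|cos (freq_dot om z) - cos (freq_dot om z')| <= d%:R * L%:R * r.
Proof.
move=> Hz; apply: (le_trans (cos_lip _ _)).
rewrite freq_dotB /freq_dot.
apply: (le_trans (ler_norm_sum _ _ _)).
have -> : d%:R * L%:R * r = \sum_(k < d) L%:R * r :> R.
  rewrite sumr_const card_ord; ring.
apply: ler_sum => k _; rewrite normrM !mxE.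
apply: ler_pM => //; first exact: freq_coord_le.
Qed.
End P6.
Section P8.
Variable R : realType.

Lemma coord_le_eucl d (a b : 'rV[R]_d) k : `|a 0 k - b 0 k| <= eucl_dist a b.
Proof.
rewrite /eucl_dist -sqrtr_sqr ler_sqrt; last by apply: sumr_ge0 => i _; exact: sqr_ge0.
rewrite (bigD1 k) //= lerDl; apply: sumr_ge0 => i _; exact: sqr_ge0.
Qed.

Lemma mx_coord_le d (a : 'rV[R]_d) k : `|a 0 k| <= `|a|.
Proof.
rewrite [X in _ <= X]mx_normrE.
exact: (le_bigmax 0 (fun ij : 'I_1 * 'I_d => `|a ij.1 ij.2|) (0, k)).
Qed.

Lemma diam_ub d (X : set 'rV[R]_d) a b : compact X -> X a -> X b ->
  eucl_dist a b <= diam X.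
Proof.
move=> cX Xa Xb.
have [M [_ HM]] := compact_bounded cX.
have HB : forall x, X x -> `|x| <= `|M| + 1.
  apply: HM; have := real_ler_norm (num_real M); lra.
apply: ub_le_sup; last by exists a => //; exists b.
exists (Num.sqrt (\sum_(k < d) (2 * (`|M| + 1)) ^+ 2)).
move=> _ [x Xx [y Xy <-]].
rewrite /eucl_dist ler_sqrt; last by apply: sumr_ge0 => i _; exact: sqr_ge0.
apply: ler_sum => k _.
rewrite -real_normK ?num_real // -[X in _ <= X]real_normK ?num_real //.
apply: lerXn2r; rewrite ?nnegrE ?normr_ge0 //.
apply: (le_trans (ler_normB _ _)).
have hx := le_trans (mx_coord_le x k) (HB _ Xx).
have hy := le_trans (mx_coord_le y k) (HB _ Xy).
have h0 : 0 <= `|M| + 1 by rewrite addr_ge0.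
rewrite ger0_norm ?mulr_ge0 //; lra.
Qed.

Lemma cover_coord (N : nat) (r z : R) : 0 < r -> `|z| <= N%:R * r ->
  exists i : 'I_(2 * N + 1), `|z - r * ((i : nat)%:R - N%:R)| <= r.
Proof.
move=> r0 hz.
set x := z / r + N%:R.
have hz' : `|z / r| <= N%:R.
  have ri : 0 < r^-1 by rewrite invr_gt0.
  by rewrite normrM (gtr0_norm ri) ler_pdivrMr.
have x0 : 0 <= x by move: hz'; rewrite ler_norml /x; lra.
have x2 : x <= (2 * N)%:R by move: hz'; rewrite ler_norml /x natrM; lra.
have [i1 i2] := andP (truncn_itv x0).
have iN : (Num.truncn x < 2 * N + 1)%N.
  rewrite addn1 ltnS; have := le_truncn x2; rewrite natrK //.
exists (Ordinal iN) => /=.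
have -> : z - r * ((Num.truncn x)%:R - N%:R) = r * (x - (Num.truncn x)%:R).
  by rewrite /x; field; rewrite gt_eqF.
rewrite normrM gtr0_norm // ger_pMr // ger0_norm ?subr_ge0 //.
move: i2; rewrite -natr1; lra.
Qed.

Definition gridpt (d N : nat) (r : R) (m : {ffun 'I_d -> 'I_(2 * N + 1)}) : 'rV[R]_d :=
  \row_k (r * ((m k : nat)%:R - N%:R)).

Lemma cover_grid d (N : nat) (r : R) (z : 'rV[R]_d) : 0 < r ->
  (forall k, `|z 0 k| <= N%:R * r) ->
  exists m : {ffun 'I_d -> 'I_(2 * N + 1)}, forall k, `|z 0 k - gridpt r m 0 k| <= r.
Proof.
move=> r0 hz.
have : forall k, exists i : 'I_(2 * N + 1), `|z 0 k - r * ((i : nat)%:R - N%:R)| <= r.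
  by move=> k; apply: cover_coord.
move=> /fin_all_exists [f hf].
exists (finfun f) => k; rewrite /gridpt mxE ffunE; exact: hf.
Qed.
End P8.
Section P9.
Variable R : realType.

Definition mu_cos d L (z : 'rV[R]_d) : R :=
  #|{: Omega d L}|%:R^-1 * \sum_(om : Omega d L) cos (freq_dot om z).
Definition avg_cos d L D (s : {ffun 'I_D -> Omega d L}) (z : 'rV[R]_d) : R :=
  D%:R^-1 * \sum_(j < D) cos (freq_dot (s j) z).

Lemma avg_lip (T : finType) (f g : T -> R) (c : R) : 0 <= c ->
  (forall t, `|f t - g t| <= c) ->
  `|#|T|%:R^-1 * \sum_t f t - #|T|%:R^-1 * \sum_t g t| <= c.
Proof.
move=> c0 hfg; have [T0|TP] := posnP #|T|.
  by rewrite T0 invr0 !mul0r subrr normr0.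
rewrite -mulrBr -sumrB normrM ger0_norm ?invr_ge0 ?ler0n //.
rewrite ler_pdivrMl ?ltr0n //.
apply: (le_trans (ler_norm_sum _ _ _)).
rewrite -sum1_card natr_sum mulr_suml; apply: ler_sum => t _; rewrite mul1r; exact: hfg.
Qed.

Lemma delta_lip d L D (s : {ffun 'I_D -> Omega d L}) (z z' : 'rV[R]_d) (r : R) :
  0 <= r -> (forall k, `|z 0 k - z' 0 k| <= r) ->
  `|(mu_cos L z - avg_cos s z) - (mu_cos L z' - avg_cos s z')| <= (d%:R * L%:R * r) *+ 2.
Proof.
move=> r0 hz.
have c0 : 0 <= d%:R * L%:R * r by rewrite !mulr_ge0 ?ler0n.
have h1 : `|mu_cos L z - mu_cos L z'| <= d%:R * L%:R * r.
  apply: avg_lip => // om; exact: cos_dot_lip.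
have h2 : `|avg_cos s z - avg_cos s z'| <= d%:R * L%:R * r.
  have := @avg_lip 'I_D (fun j => cos (freq_dot (s j) z)) (fun j => cos (freq_dot (s j) z')) _ c0.
  rewrite card_ord; apply => j; exact: cos_dot_lip.
have -> : mu_cos L z - avg_cos s z - (mu_cos L z' - avg_cos s z') =
   (mu_cos L z - mu_cos L z') - (avg_cos s z - avg_cos s z') by ring.
apply: (le_trans (ler_normB _ _)); rewrite mulr2n; exact: lerD.
Qed.

Lemma delta0 d L D (s : {ffun 'I_D -> Omega d L}) : (0 < D)%N ->
  mu_cos L (0 : 'rV[R]_d) - avg_cos s 0 = 0.
Proof.
move=> D0.
have fd0 : forall om : Omega d L, freq_dot om (0 : 'rV[R]_d) = 0.
  by move=> om; rewrite /freq_dot big1 // => k _; rewrite mxE mulr0.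
have NT : (0 < #|{: Omega d L}|)%N.
  by rewrite card_ffun card_ord expn_gt0 addn1.
rewrite /mu_cos /avg_cos.
under eq_bigr do rewrite fd0 cos0.
under [X in _ - _ * X]eq_bigr do rewrite fd0 cos0.
have hN : (#|{: Omega d L}|%:R : R) != 0 by rewrite pnatr_eq0 -lt0n.
have hD : (D%:R : R) != 0 by rewrite pnatr_eq0 -lt0n.
by rewrite !sumr_const card_ord (mulVf hN) (mulVf hD) subrr.
Qed.

Lemma close_of_bound d L M D (X : set 'rV[R]_d) (xs : 'I_M -> 'rV[R]_d) (ys : 'I_M -> R)
  (lam eps eta : R) (s : {ffun 'I_D -> Omega d L}) :
  (0 < M)%N -> (0 < D)%N -> 0 < lam -> 0 <= eta -> (forall i, X (xs i)) ->
  (forall a b, X a -> X b -> `|mu_cos L (a - b) - avg_cos s (a - b)| <= eta) ->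
  eta * sigma_y ys * (1 + lam) / lam ^+ 2 <= eps ->
  close_event X xs ys lam eps s.
Proof.
move=> M0 D0 lam0 eta0 Xxs Hb He w wt Hw Hwt x Xx.
apply: le_trans He.
apply: (det_bound M0 lam0 eta0 Hw Hwt).
- by move=> i l; rewrite kern_full kern_rff; apply: Hb.
- by move=> i; rewrite kern_full kern_rff; apply: Hb.
- move=> i; rewrite kern_rff.
  by have := avg_cos_le1 (fun j : 'I_D => freq_dot (s j) (xs i - x)); rewrite card_ord; apply.
Qed.
End P9.
Section P10.
Variable R : realType.

Lemma final_arith (d L D N : nat) (dX sy lam eps delta eta r : R) :
  (0 < d)%N -> (0 < L)%N -> 0 < lam -> 0 < eps -> 0 < delta -> delta < 1 ->
  0 < sy -> 0 < dX ->
  eta = eps * lam ^+ 2 / (sy * (1 + lam)) -> eta < (d%:R * L%:R * dX) *+ 2 ->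
  r = eta / (4 * d%:R * L%:R) -> N = (Num.truncn (dX / r)).+1 ->
  128 * (d%:R * (sy ^+ 2 + 1) * (1 + lam) ^+ 2 / (lam ^+ 4 * eps ^+ 2)
     * (ln (d%:R * L%:R ^+ 2 * dX) + ln (28 * (`|sy| + 1) * (1 + lam) / (eps * lam ^+ 2))
        - ln delta)) <= D%:R ->
  (2 * N + 1)%:R ^+ d * 2 * expR (- (D%:R * (eta / 2) ^+ 2 / 32)) <= delta.
Proof.
move=> d0 L0 lam0 eps0 de0 de1 sy0 dX0 Heta etalt Hr HN HD.
have dpos : 0 < d%:R :> R by rewrite ltr0n.
have Lpos : 0 < L%:R :> R by rewrite ltr0n.
have L1 : 1 <= L%:R :> R by rewrite ler1n.
have d1 : 1 <= d%:R :> R by rewrite ler1n.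
have lam2 : 0 < lam ^+ 2 by rewrite exprn_gt0.
have el0 : 0 < eps * lam ^+ 2 by rewrite mulr_gt0.
have l1 : 0 < 1 + lam by rewrite ltr_pwDr.
have eta0 : 0 < eta by rewrite Heta divr_gt0 ?mulr_gt0 ?exprn_gt0 // ltr_pwDr.
have r0 : 0 < r by rewrite Hr divr_gt0 // !mulr_gt0.
set Q := 14 * d%:R * L%:R * dX / eta.
have dLX : 0 < d%:R * L%:R * dX by rewrite !mulr_gt0.
have hdr : dX / r = 4 * (d%:R * L%:R * dX) / eta.
  by rewrite Hr; field; rewrite !gt_eqF.
have h2N : (2 * N + 1)%:R <= Q.
  have ht : (Num.truncn (dX / r))%:R <= dX / r.
    by have := truncn_itv (ltW (divr_gt0 dX0 r0)) => /andP [].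
  have hNr : N%:R = (Num.truncn (dX / r))%:R + 1 :> R by rewrite HN -natr1.
  rewrite natrD natrM hNr.
  rewrite [X in _ <= X]hdr in ht.
  have hq : Q = 14 * (d%:R * L%:R * dX) / eta by rewrite /Q; field; rewrite gt_eqF.
  rewrite hq.
  set u := d%:R * L%:R * dX in ht hq etalt dLX *.
  set tt := (Num.truncn _)%:R in ht *.
  have hu : 1 < 2 * u / eta by rewrite ltr_pdivlMr // mul1r; move: etalt; rewrite mulr2n; lra.
  have e1 : 4 * u / eta = 2 * (2 * u / eta) by field; rewrite gt_eqF.
  have e2 : 14 * u / eta = 7 * (2 * u / eta) by field; rewrite gt_eqF.
  rewrite e1 in ht; rewrite e2.
  set v := 2 * u / eta in hu ht e1 e2 *.
  lra.
have Q0 : 0 < Q by rewrite /Q divr_gt0 // !mulr_gt0.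
have Q1 : 1 < Q.
  apply: lt_le_trans h2N; rewrite ltr1n; by rewrite addn1 ltnS muln_gt0 HN.
set A := d%:R * L%:R ^+ 2 * dX.
set Bc := 28 * (`|sy| + 1) * (1 + lam) / (eps * lam ^+ 2).
have A0 : 0 < A by rewrite /A !mulr_gt0 ?exprn_gt0.
have Bc0 : 0 < Bc.
  by rewrite /Bc divr_gt0 ?mulr_gt0 ?exprn_gt0 ?ltr_pwDr ?normr_ge0.
have h2Q : 2 * Q <= A * Bc.
  have -> : 2 * Q = 28 * sy * (1 + lam) / (eps * lam ^+ 2) * (d%:R * L%:R * dX).
    rewrite /Q Heta; field; rewrite ?gt_eqF ?mulr_gt0 ?exprn_gt0 ?ltr_pwDr //.
  rewrite mulrC /A /Bc.
  have -> : d%:R * L%:R ^+ 2 * dX * (28 * (`|sy| + 1) * (1 + lam) / (eps * lam ^+ 2))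
     = (d%:R * L%:R * dX) * (L%:R * (28 * (`|sy| + 1) * (1 + lam) / (eps * lam ^+ 2))).
    by rewrite expr2; ring.
  apply: ler_wpM2l; first exact: ltW.
  set W := (1 + lam) / (eps * lam ^+ 2).
  have W0 : 0 < W by rewrite /W divr_gt0.
  rewrite (_ : 28 * sy * (1 + lam) / (eps * lam ^+ 2) = (28 * sy) * W); last by rewrite /W; ring.
  rewrite (_ : L%:R * (28 * (`|sy| + 1) * (1 + lam) / (eps * lam ^+ 2)) = (L%:R * (28 * (`|sy| + 1))) * W); last by rewrite /W; ring.
  apply: ler_wpM2r; first exact: ltW.
  have hs : sy <= `|sy| + 1 by have := real_ler_norm (num_real sy); lra.
  have := ler_pM ler01 (ltW sy0) L1 hs; rewrite mul1r => hh.
  have hh2 : 0 <= L%:R * (`|sy| + 1) - sy by lra.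
  rewrite -subr_ge0 (_ : L%:R * (28 * (`|sy| + 1)) - 28 * sy = 28 * (L%:R * (`|sy| + 1) - sy)); last by ring.
  by rewrite mulr_ge0.
have lnQ : ln (2 * Q) <= ln A + ln Bc.
  have h2Q0 : 0 < 2 * Q by rewrite mulr_gt0.
  have AB0 : 0 < A * Bc by rewrite mulr_gt0.
  by rewrite -lnM ?posrE // ler_ln ?posrE.
have lnde : ln delta < 0 by rewrite -ln1 ltr_ln ?posrE.
have ln2 : 0 < ln (2 : R) by apply: ln_gt0; lra.
have lnQ0 : 0 < ln Q by apply: ln_gt0.
have ln2Q : ln (2 * Q) = ln 2 + ln Q by rewrite lnM ?posrE.
set lnB := ln A + ln Bc - ln delta.
have lnB0 : ln 2 + ln Q - ln delta <= lnB by rewrite /lnB; move: lnQ; rewrite ln2Q; lra.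
have hDe : d%:R * lnB <= D%:R * eta ^+ 2 / 128.
  have hB0 : 0 <= lnB by lra.
  have e : d%:R * lnB = 128 * (d%:R * sy ^+ 2 * (1 + lam) ^+ 2 / (lam ^+ 4 * eps ^+ 2) * lnB) * eta ^+ 2 / 128.
    rewrite Heta; field; rewrite ?gt_eqF ?mulr_gt0 ?exprn_gt0 ?ltr_pwDr //.
  rewrite e; apply: ler_wpM2r; first by rewrite invr_ge0.
  apply: ler_wpM2r; first exact: sqr_ge0.
  apply: le_trans HD; apply: ler_wpM2l => //.
  apply: ler_wpM2r => //.
  apply: ler_wpM2r; first by rewrite invr_ge0 mulr_ge0 ?exprn_ge0 // ltW.
  apply: ler_wpM2r; first by rewrite exprn_ge0 // addr_ge0 // ltW.
  apply: ler_wpM2l; first exact: ltW.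
  lra.
have hfin : ln Q *+ d + ln 2 - D%:R * eta ^+ 2 / 128 <= ln delta.
  have : d%:R * (ln 2 + ln Q - ln delta) <= d%:R * lnB by apply: ler_wpM2l => //; exact: ltW.
  have : (d%:R - 1) * (ln 2 - ln delta) >= 0 by apply: mulr_ge0; lra.
  rewrite -mulr_natr; nra.
have hQd : (2 * N + 1)%:R ^+ d <= expR (ln Q *+ d).
  rewrite -lnXn // lnK ?posrE ?exprn_gt0 //.
  by apply: lerXn2r; rewrite ?nnegrE ?ler0n // ltW.
have -> : D%:R * (eta / 2) ^+ 2 / 32 = D%:R * eta ^+ 2 / 128 by field.
rewrite -(lnK (x := delta)) ?posrE //.
apply: (@le_trans _ _ (expR (ln Q *+ d) * 2 * expR (- (D%:R * eta ^+ 2 / 128)))).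
  apply: ler_wpM2r; first exact: ltW (expR_gt0 _).
  by apply: ler_wpM2r.
rewrite -(lnK (x := 2)) ?posrE // -!expRD ler_expR mulrA; lra.
Qed.
End P10.
Local Close Scope classical_set_scope.
Lemma union_card (G S : finType) (P : G -> S -> bool) :
  (#|[set s | [exists g, P g s]]%SET| <= \sum_g #|[set s | P g s]%SET|)%N.
Proof.
have E : forall g, #|[set s | P g s]%SET| = (\sum_s (P g s : nat))%N.
  move=> g; rewrite -sum1_card big_mkcond /=; apply: eq_bigr => s _.
  by rewrite inE; case: (P g s).
under [X in (_ <= X)%N]eq_bigr do rewrite E.
rewrite exchange_big /= -sum1_card big_mkcond /=; apply: leq_sum => s _.
rewrite inE; case: existsP => [[g Hg]|_] //.
by rewrite (bigD1 g) //= Hg.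
Qed.
Section P7.
Variable R : realType.

Lemma expR_le_quad (x : R) : x <= 1/2 -> expR x <= 1 + x + 2 * x ^+ 2.
Proof.
move=> hx.
have h := expR_ge1Dx (- x); rewrite expRN in h.
have ex := expR_gt0 x.
have h2 : (1 - x) * expR x <= 1.
  have := ler_wpM2r (ltW ex) h; rewrite mulVf ?gt_eqF //.
have h3 : 0 <= x ^+ 2 * (1 - 2 * x) by rewrite mulr_ge0 ?sqr_ge0 //; lra.
have h1x : 0 < 1 - x by lra.
have h4 : 1 <= (1 - x) * (1 + x + 2 * x ^+ 2).
  rewrite -subr_ge0 (_ : (1 - x) * (1 + x + 2 * x ^+ 2) - 1 = x ^+ 2 * (1 - 2 * x)) //; ring.
rewrite -(ler_pM2l h1x); exact: le_trans h2 h4.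
Qed.

Lemma markov_count (S : finType) (F : S -> R) (P : pred S) (a : R) :
  (forall s, 0 <= F s) -> (forall s, P s -> a <= F s) ->
  #|[set s | P s]|%:R * a <= \sum_s F s.
Proof.
move=> F0 HP.
rewrite -sum1_card natr_sum mulr_suml.
apply: (@le_trans _ _ (\sum_(s in [set s | P s]) F s)).
  apply: ler_sum => s; rewrite inE => Ps; rewrite mul1r; exact: HP.
rewrite [X in _ <= X](bigID (fun s => s \in [set s | P s])) /= lerDl.
by apply: sumr_ge0.
Qed.

Lemma hoeff_one (T : finType) (D : nat) (Z : T -> R) (tau : R) :
  (0 < #|T|)%N -> \sum_t Z t = 0 -> (forall t, `|Z t| <= 2) -> 0 < tau <= 4 ->
  #|[set s : {ffun 'I_D -> T} | D%:R * tau < \sum_j Z (s j)]|%:R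
    <= #|T|%:R ^+ D * expR (- (D%:R * tau ^+ 2 / 32)).
Proof.
move=> T0 Z0 Zb /andP [tau0 tau4].
set th := tau / 16.
have th0 : 0 < th by rewrite /th divr_gt0.
set g := fun t => expR (th * Z t).
have Mk := @markov_count _ (fun s : {ffun 'I_D -> T} => \prod_j g (s j))
  (fun s => D%:R * tau < \sum_j Z (s j)) (expR (th * (D%:R * tau))).
have Hsum : \sum_(s : {ffun 'I_D -> T}) \prod_j g (s j) = (\sum_t g t) ^+ D.
  rewrite -(bigA_distr_bigA (fun (j : 'I_D) t => g t)) /=.
  by rewrite prodr_const card_ord.
have Hg : \sum_t g t <= #|T|%:R * expR (8 * th ^+ 2).
  apply: (@le_trans _ _ (\sum_t (1 + th * Z t + 2 * (th * Z t) ^+ 2))).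
    apply: ler_sum => t _; apply: expR_le_quad.
    have := Zb t; rewrite ler_norml => /andP [_ h].
    have : th * Z t <= th * 2 by rewrite ler_pM2l.
    rewrite /th; lra.
  rewrite !big_split /= -!mulr_sumr Z0 mulr0 addr0 sumr_const.
  have HZ2 : \sum_t (th * Z t) ^+ 2 <= \sum_(t : T) th ^+ 2 * 4.
    apply: ler_sum => t _; rewrite exprMn; apply: ler_wpM2l; first exact: sqr_ge0.
    have := Zb t; rewrite -(ler_sqr (normr_ge0 _)) ?nnegrE // real_normK ?num_real //.
    by move=> /le_trans; apply; rewrite expr2 -natrM.
  rewrite sumr_const in HZ2.
  have e1 := expR_ge1Dx (8 * th ^+ 2).
  have N0 : 0 <= #|T|%:R :> R by rewrite ler0n.
  have : (1 *+ #|T|) + 2 * \sum_t (th * Z t) ^+ 2 <= #|T|%:R * (1 + 8 * th ^+ 2).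
    rewrite -mulr_natl mulr1.
    have : 2 * \sum_t (th * Z t) ^+ 2 <= 2 * (th ^+ 2 * 4 *+ #|T|) by rewrite ler_pM2l.
    rewrite -mulr_natl; lra.
  move=> /le_trans; apply; apply: ler_wpM2l => //.
have Hprod : forall s : {ffun 'I_D -> T}, \prod_j g (s j) = expR (th * \sum_j Z (s j)).
  by move=> s; rewrite mulr_sumr expR_sum.
have Fpos : forall s : {ffun 'I_D -> T}, 0 <= \prod_j g (s j).
  by move=> s; rewrite Hprod; exact: ltW (expR_gt0 _).
have HP : forall s : {ffun 'I_D -> T}, D%:R * tau < \sum_j Z (s j) ->
    expR (th * (D%:R * tau)) <= \prod_j g (s j).
  by move=> s hs; rewrite Hprod ler_expR ler_pM2l // ltW.
have Hb : #|[set s : {ffun 'I_D -> T} | D%:R * tau < \sum_j Z (s j)]|%:R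
     * expR (th * (D%:R * tau)) <= #|T|%:R ^+ D * expR (D%:R * (8 * th ^+ 2)).
  apply: le_trans (Mk Fpos HP) _; rewrite Hsum expRM_natl -exprMn.
  apply: lerXn2r => //; rewrite nnegrE.
    by apply: sumr_ge0 => t _; exact: ltW (expR_gt0 _).
  by rewrite mulr_ge0 ?ler0n // ltW // expR_gt0.
rewrite -(ler_pM2r (expR_gt0 (th * (D%:R * tau)))); apply: le_trans Hb _.
rewrite -(mulrA (_ ^+ D)) -expRD; rewrite le_eqVlt; apply/orP; left; apply/eqP; congr (_ * expR _); rewrite /th; by field.
Qed.

Lemma avg_le1 (T : finType) (h : T -> R) : (forall t, `|h t| <= 1) ->
  `|#|T|%:R^-1 * \sum_t h t| <= 1.
Proof.
move=> hb; have [T0|TP] := posnP #|T|.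
  by rewrite T0 invr0 mul0r normr0.
rewrite normrM ger0_norm ?invr_ge0 ?ler0n //.
rewrite ler_pdivrMl ?ltr0n // mulr1.
apply: (le_trans (ler_norm_sum _ _ _)).
rewrite -sum1_card natr_sum; apply: ler_sum => t _; exact: hb.
Qed.

Lemma hoeff_two (T : finType) (D : nat) (h : T -> R) (tau : R) :
  (0 < #|T|)%N -> (0 < D)%N -> (forall t, `|h t| <= 1) -> 0 < tau ->
  #|[set s : {ffun 'I_D -> T} |
      tau < `|#|T|%:R^-1 * \sum_t h t - D%:R^-1 * \sum_j h (s j)|]|%:R
    <= 2 * (#|T|%:R ^+ D * expR (- (D%:R * tau ^+ 2 / 32))).
Proof.
move=> T0 D0 hb tau0.
set mu := #|T|%:R^-1 * \sum_t h t.
have mub : `|mu| <= 1 by apply: avg_le1.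
have Dpos : 0 < D%:R :> R by rewrite ltr0n.
have Npos : 0 < #|T|%:R :> R by rewrite ltr0n.
have [tau4|tau4] := leP tau 4; last first.
  rewrite (_ : [set s | _] = finset.set0).
  rewrite cards0; apply: mulr_ge0 => //; apply: mulr_ge0 => //; try exact: ltW (expR_gt0 _).
  apply/setP => s; rewrite !inE; apply/negbTE; rewrite -leNgt.
  apply: (le_trans (ler_normB _ _)).
  have := @avg_le1 _ (fun j => h (s j)) (fun j => hb (s j)); rewrite card_ord => hav.
  lra.
set Z := fun t => h t - mu.
have ZS : \sum_t Z t = 0.
  rewrite /Z sumrB sumr_const.
  have -> : mu *+ #|T| = #|T|%:R * mu by rewrite mulr_natl.
  by rewrite /mu mulrA mulfV ?gt_eqF // mul1r subrr.
have Zb : forall t, `|Z t| <= 2.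
  move=> t; apply: (le_trans (ler_normB _ _)); have := hb t; lra.
have ZS' : \sum_t (- Z t) = 0 by rewrite sumrN ZS oppr0.
have Zb' : forall t, `|- Z t| <= 2 by move=> t; rewrite normrN.
have taub : 0 < tau <= 4 by rewrite tau0 tau4.
have H1 := hoeff_one D T0 ZS Zb taub.
have H2 := hoeff_one D T0 ZS' Zb' taub.
have Hsub : [set s : {ffun 'I_D -> T} | tau < `|mu - D%:R^-1 * \sum_j h (s j)|] \subset
   [set s : {ffun 'I_D -> T} | D%:R * tau < \sum_j Z (s j)] :|:
   [set s : {ffun 'I_D -> T} | D%:R * tau < \sum_j - Z (s j)].
  apply/fintype.subsetP => s; rewrite !inE => hs.
  have EZ : \sum_j Z (s j) = \sum_j h (s j) - D%:R * mu.
    by rewrite /Z sumrB sumr_const card_ord mulr_natl.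
  have EZ' : \sum_j - Z (s j) = D%:R * mu - \sum_j h (s j).
    by rewrite sumrN EZ opprB.
  rewrite EZ EZ'.
  move: hs; set S := \sum_j h (s j).
  have -> : mu - D%:R^-1 * S = D%:R^-1 * (D%:R * mu - S).
    by field; rewrite gt_eqF.
  rewrite normrM ger0_norm ?invr_ge0 ?ler0n // -ltr_pdivrMl ?invr_gt0 // invrK.
  rewrite mulrC ltr_normr => /orP [h1|h2]; apply/orP; [right|left]; lra.
have := subset_leq_card Hsub => /leq_trans /(_ (leq_card_setU _ _).1).
rewrite -(ler_nat R) natrD => hc.
apply: (le_trans hc); rewrite mulr2n mulrDl mul1r; exact: lerD.
Qed.
End P7.
Section P11.
Variable R : realType.
Lemma prob_lb d L D (E : {ffun 'I_D -> Omega d L} -> Prop)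
  (B : {set {ffun 'I_D -> Omega d L}}) (delta : R) :
  (forall s, s \notin B -> E s) ->
  #|B|%:R <= delta * #|{: {ffun 'I_D -> Omega d L}}|%:R ->
  1 - delta <= @prob_sample R d L D E.
Proof.
move=> HE HB.
rewrite /prob_sample.
have S0 : (0 < #|{: {ffun 'I_D -> Omega d L}}|)%N.
  by rewrite card_ffun card_ffun !card_ord expn_gt0 expn_gt0 addn1.
have Hsub : (~: B) \subset [set s | `[< E s >]]%classic.
  apply/fintype.subsetP => s; rewrite inE => hs.
  by rewrite in_setE /=; apply/asboolP; apply: HE.
have Hc := subset_leq_card Hsub.
have HC := cardsC B.
have Spos : 0 < #|{ffun 'I_D -> Omega d L}|%:R :> R by rewrite ltr0n.
rewrite ler_pdivlMr //.
apply: (@le_trans _ _ (#|~: B|%:R)); last by rewrite ler_nat.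
have : (#|B| + #|~: B|)%:R = #|{ffun 'I_D -> Omega d L}|%:R :> R by rewrite HC.
rewrite natrD => e.
move: HB; rewrite -e; lra.
Qed.

End P11.
Local Open Scope classical_set_scope.

Theorem theorem1 (R : realType) :
  exists K : R, 0 < K /\
  exists C1 C2 : R -> R -> R,
    (forall sy dX, 0 < C1 sy dX /\ 0 < C2 sy dX) /\
    forall (d L M D : nat) (X : set 'rV[R]_d)
      (xs : 'I_M -> 'rV[R]_d) (ys : 'I_M -> R) (lam eps delta : R),
      (0 < d)%N -> (0 < L)%N -> (0 < M)%N -> (0 < D)%N ->
      compact X -> X !=set0 -> (forall i, X (xs i)) ->
      0 < lam -> 0 < eps -> 0 < delta < 1 ->
      let sy := sigma_y ys in
      let dX := diam X in
      K * (d%:R * C1 sy dX * (1 + lam) ^+ 2 / (lam ^+ 4 * eps ^+ 2)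
           * (ln (d%:R * L%:R ^+ 2 * dX)
              + ln (C2 sy dX * (1 + lam) / (eps * lam ^+ 2))
              - ln delta)) <= D%:R ->
      1 - delta <= @prob_sample R d L D (@close_event R d L M D X xs ys lam eps).
Proof.
exists 128; split; first by rewrite ltr0n.
exists (fun sy _ => sy ^+ 2 + 1), (fun sy _ => 28 * (`|sy| + 1)); split.
  move=> sy _; split; first by have := sqr_ge0 sy; lra.
  by rewrite mulr_gt0 //; have := normr_ge0 sy; lra.
move=> d L M D X xs ys lam eps delta d0 L0 M0 D0 cX X0 Xxs lam0 eps0 /andP [de0 de1] sy dX HD.
have [x0 Xx0] := X0.
have sy0 : 0 <= sy by apply: sqrtr_ge0.
have dX0 : 0 <= dX := le_trans (sqrtr_ge0 _) (diam_ub cX Xx0 Xx0).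
have Hcoord : forall a b k, X a -> X b -> `|(a - b) 0 k - (0 : 'rV[R]_d) 0 k| <= dX.
  move=> a b k Xa Xb; rewrite !mxE subr0.
  exact: le_trans (coord_le_eucl a b k) (diam_ub cX Xa Xb).
have Hdet : forall (s : {ffun 'I_D -> Omega d L}) a b, X a -> X b ->
    `|mu_cos L (a - b) - avg_cos s (a - b)| <= (d%:R * L%:R * dX) *+ 2.
  move=> s a b Xa Xb.
  have := delta_lip s dX0 (fun k => Hcoord a b k Xa Xb).
  by rewrite delta0 // subr0.
have NT : (0 < #|{: Omega d L}|)%N.
  by rewrite card_ffun card_ord expn_gt0 addn1.
have [hbig|hsmall] := leP ((d%:R * L%:R * dX) *+ 2 * sy * (1 + lam) / lam ^+ 2) eps.
  apply: (prob_lb (B := finset.set0)) => [s _|].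
    apply: (close_of_bound M0 D0 lam0 _ Xxs (Hdet s) hbig).
    by rewrite mulrn_wge0 // !mulr_ge0 ?ler0n.
  rewrite cards0; apply: mulr_ge0 => //; exact: ltW.
set c := d%:R * L%:R * dX.
have hsm : eps * lam ^+ 2 < c *+ 2 * sy * (1 + lam).
  have lam2 : 0 < lam ^+ 2 by rewrite exprn_gt0.
  by move: hsmall; rewrite (ltr_pdivlMr _ _ lam2).
have l1 : 0 < 1 + lam by rewrite ltr_pwDr.
have sypos : 0 < sy.
  rewrite lt_def sy0 andbT; apply/eqP => e; move: hsm; rewrite e mulr0 mul0r.
  by apply/negP; rewrite -leNgt mulr_ge0 // ltW // exprn_gt0.
have dXpos : 0 < dX.
  rewrite lt_def dX0 andbT; apply/eqP => e; move: hsm; rewrite /c e mulr0 mul0rn !mul0r.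
  by apply/negP; rewrite -leNgt mulr_ge0 // ltW // exprn_gt0.
set eta := eps * lam ^+ 2 / (sy * (1 + lam)).
have syl : 0 < sy * (1 + lam) by rewrite mulr_gt0.
have eta0 : 0 < eta by rewrite /eta divr_gt0 // mulr_gt0 // exprn_gt0.
have etalt : eta < c *+ 2.
  rewrite /eta ltr_pdivrMr //; move: hsm; rewrite /c; lra.
have dLpos : 0 < 4 * d%:R * L%:R :> R by rewrite !mulr_gt0 // ltr0n.
set r := eta / (4 * d%:R * L%:R).
have r0 : 0 < r by rewrite divr_gt0.
set N := (Num.truncn (dX / r)).+1.
have hNr : dX <= N%:R * r.
  have := truncn_itv (ltW (divr_gt0 dXpos r0)) => /andP [_ h].
  by rewrite -ler_pdivrMr // ltW.
set bad := fun (m : {ffun 'I_d -> 'I_(2 * N + 1)}) (s : {ffun 'I_D -> Omega d L}) =>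
  eta / 2 < `|mu_cos L (gridpt r m) - avg_cos s (gridpt r m)|.
apply: (prob_lb (B := [set s | [exists m, bad m s]]%SET)).
  move=> s; rewrite inE negb_exists => /forallP hs.
  apply: (close_of_bound M0 D0 lam0 (ltW eta0) Xxs); last first.
    rewrite le_eqVlt; apply/orP; left; apply/eqP; rewrite /eta.
    rewrite -/sy; field; rewrite ?gt_eqF // ?exprn_gt0 // ?mulr_gt0.
  move=> a b Xa Xb.
  have hz : forall k, `|(a - b) 0 k| <= N%:R * r.
    by move=> k; apply: le_trans hNr; have := Hcoord a b k Xa Xb; rewrite !mxE subr0.
  have [m hm] := cover_grid r0 hz.
  have := hs m; rewrite /bad -leNgt => hgm.
  have := delta_lip s (ltW r0) hm.
  have -> : (d%:R * L%:R * r) *+ 2 = eta / 2.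
    by rewrite /r mulr2n; field; rewrite !gt_eqF // ltr0n.
  move=> hl.
  have := ler_normD (mu_cos L (a - b) - avg_cos s (a - b) - (mu_cos L (gridpt r m) - avg_cos s (gridpt r m))) (mu_cos L (gridpt r m) - avg_cos s (gridpt r m)).
  rewrite subrK; lra.
set E := expR (- (D%:R * (eta / 2) ^+ 2 / 32)).
have Hm : forall m, #|[set s | bad m s]%SET|%:R <= 2 * (#|{: Omega d L}|%:R ^+ D * E).
  move=> m.
  have eta2 : 0 < eta / 2 by rewrite divr_gt0.
  exact: (@hoeff_two R (Omega d L) D (fun om => cos (freq_dot om (gridpt r m))) (eta / 2)
            NT D0 (fun om => cos_max _) eta2).
have U := union_card bad.
rewrite -(ler_nat R) natr_sum in U.
apply: (le_trans U).
apply: (le_trans (ler_sum _ (fun m _ => Hm m))).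
set C := 2 * (#|{: Omega d L}|%:R ^+ D * E).
have Hs : \sum_(m : {ffun 'I_d -> 'I_(2 * N + 1)}) C = (2 * N + 1)%:R ^+ d * C.
  by rewrite sumr_const card_ffun !card_ord -natrX mulr_natl.
rewrite Hs card_ffun card_ord natrX.
have FA := final_arith d0 L0 lam0 eps0 de0 de1 sypos dXpos (erefl eta) etalt (erefl r) (erefl N) HD.
rewrite -/E in FA.
have NT0 : 0 <= #|{: Omega d L}|%:R ^+ D :> R by rewrite exprn_ge0 ?ler0n.
have := ler_wpM2r NT0 FA.
rewrite /C (_ : (2 * N + 1)%:R ^+ d * 2 * E * #|{: Omega d L}|%:R ^+ D =
   (2 * N + 1)%:R ^+ d * (2 * (#|{: Omega d L}|%:R ^+ D * E))) //; ring.
Qed.
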